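(* Let $R$ be an $L$-layered domain$^\dagger$ (in particular $R$ is $\nu$-bipotent) whose tangible layer $R_1$ is a finite set. Then either $1\in L$ is infinite (i.e. $1+1=1$ in $L$), or the $\nu$-relation is trivial on $R_1$, in the sense that $a\cong_\nu \mathbb{1}_R$ for all $a\in R_1$.
   Context: A semiring$^\dagger$ is a structure $(L,+,\cdot,1)$ with $(L,\cdot,1)$ a monoid, $(L,+)$ an abelian semigroup, and two-sided distributivity (no zero element required). Let $L$ be a semiring$^\dagger$ with a designated sub-semiring$^\dagger$ $L_+$ of positive elements ($1\in L_+$); write $k\ge \ell$ iff $k=\ell$ or $k=\ell+p$ for some $p\in L_+$, assumed to be a partial order. An element $\ell\in L$ is finite if $\ell+m\neq\ell$ for all $m\in L_+$, and infinite otherwise. An $L$-quasi-layered domain$^\dagger$ is a commutative semiring$^\dagger$ $R$ with a decomposition into disjoint subsets $R=\bigsqcup_{\ell\in L}R_\ell$ and sort transition maps $\nu_{m,\ell}:R_\ell\to R_m$ for $m\ge\ell$, with $\nu_{\ell,\ell}=\mathrm{id}$, $\nu_{m,\ell}\circ\nu_{\ell,k}=\nu_{m,k}$, satisfying: (A1) $\mathbb{1}_R\in R_1$; (A2) $R_kR_\ell\subseteq R_{k\ell}$; (A3) $\nu_{m,k}(a)\nu_{m',\ell}(b)=\nu_{mm',k\ell}(ab)$ for $a\in R_k,b\in R_\ell$, $m\ge k,m'\ge\ell$; (A4) $\nu_{\ell,k}(a)+\nu_{\ell',k}(a)=\nu_{\ell+\ell',k}(a)$; (B) if $a\in R_k$,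 $b\in R_\ell$, $a\cong_\nu b$ then $a+b\in R_{k+\ell}$, $a+b\cong_\nu a$, and $a+b=a$ if $k$ is infinite. Here $a\cong_\nu b$ ($a\in R_k,b\in R_\ell$) means $\nu_{m,k}(a)=\nu_{m,\ell}(b)$ for some $m\ge k,\ell$; $a\le_\nu b$ means $a+b\cong_\nu b$; $a<_\nu b$ means $a\le_\nu b$ and $a\not\cong_\nu b$. $R$ is an $L$-layered domain$^\dagger$ if it is $\nu$-bipotent: for $a\not\cong_\nu b$ either $a<_\nu b$ or $b<_\nu a$, and $a<_\nu b$ implies $a+b=b$. Elements of $R_1$ are called tangible. *)

(* Defs.v *)
From Stdlib Require Import List.

Set Implicit Arguments.

Record is_semiring_dagger (L : Type) (add mul : L -> L -> L) (one : L) : Prop := {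
  sd_addA : forall x y z, add x (add y z) = add (add x y) z;
  sd_addC : forall x y, add x y = add y x;
  sd_mulA : forall x y z, mul x (mul y z) = mul (mul x y) z;
  sd_mul1l : forall x, mul one x = x;
  sd_mul1r : forall x, mul x one = x;
  sd_mulDl : forall x y z, mul (add x y) z = add (mul x z) (mul y z);
  sd_mulDr : forall x y z, mul x (add y z) = add (mul x y) (mul x z)
}.

Record is_com_semiring_dagger (R : Type) (add mul : R -> R -> R) (one : R) : Prop := {
  csd_semiring : is_semiring_dagger add mul one;
  csd_mulC : forall x y, mul x y = mul y x
}.

Section Layered.
Variables (L : Type) (addL mulL : L -> L -> L) (oneL : L) (Lpos : L -> Prop).

Definition is_positive_subsemiring : Prop :=
  Lpos oneL /\ (forall p q, Lpos p -> Lpos q -> Lpos (addL p q))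
            /\ (forall p q, Lpos p -> Lpos q -> Lpos (mulL p q)).

Definition geL (k l : L) : Prop := k = l \/ exists p, Lpos p /\ k = addL l p.

(** geL is assumed to be a partial order (reflexivity is automatic). *)
Definition geL_partial_order : Prop :=
  (forall k l, geL k l -> geL l k -> k = l) /\
  (forall k l m, geL k l -> geL l m -> geL k m).

Definition finiteL (l : L) : Prop := forall m, Lpos m -> addL l m <> l.
Definition infiniteL (l : L) : Prop := ~ finiteL l.

Variables (R : Type) (addR mulR : R -> R -> R) (oneR : R).
(** the decomposition R = disjoint union of the R_l is given by the sort
    function [lay] (a belongs to R_(lay a)); the sort transition map
    nu_{m,l} : R_l -> R_m (m >= l) is [nu m l], only its values on R_l matter. *)
Variables (lay : R -> L) (nu : L -> L -> R -> R).

Definition nu_cong (a b : R) : Prop :=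
  exists m, geL m (lay a) /\ geL m (lay b) /\ nu m (lay a) a = nu m (lay b) b.

Definition nu_le (a b : R) : Prop := nu_cong (addR a b) b.
Definition nu_lt (a b : R) : Prop := nu_le a b /\ ~ nu_cong a b.

Record is_quasi_layered_domain : Prop := {
  qld_semiring : is_com_semiring_dagger addR mulR oneR;
  qld_nu_sort : forall m a, geL m (lay a) -> lay (nu m (lay a) a) = m;
  qld_nu_id : forall a, nu (lay a) (lay a) a = a;
  qld_nu_comp : forall m l a, geL m l -> geL l (lay a) ->
      nu m l (nu l (lay a) a) = nu m (lay a) a;
  qld_A1 : lay oneR = oneL;
  qld_A2 : forall a b, lay (mulR a b) = mulL (lay a) (lay b);
  qld_A3 : forall a b m m', geL m (lay a) -> geL m' (lay b) ->
      mulR (nu m (lay a) a) (nu m' (lay b) b)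
      = nu (mulL m m') (mulL (lay a) (lay b)) (mulR a b);
  qld_A4 : forall a l l', geL l (lay a) -> geL l' (lay a) ->
      addR (nu l (lay a) a) (nu l' (lay a) a) = nu (addL l l') (lay a) a;
  qld_B : forall a b, nu_cong a b ->
      lay (addR a b) = addL (lay a) (lay b) /\ nu_cong (addR a b) a /\
      (infiniteL (lay a) -> addR a b = a)
}.

Definition nu_bipotent : Prop :=
  (forall a b, ~ nu_cong a b -> nu_lt a b \/ nu_lt b a) /\
  (forall a b, nu_lt a b -> addR a b = b).

Definition is_layered_domain : Prop := is_quasi_layered_domain /\ nu_bipotent.

Definition tangible_finite : Prop :=
  exists s : list R, forall a, lay a = oneL -> In a s.

End Layered.

(* Main.v *)
Require Import Defs.
From Stdlib Require Import List Classical Arith Lia FinFun.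

Theorem corollary3p15
  (L : Type) (addL mulL : L -> L -> L) (oneL : L) (Lpos : L -> Prop)
  (HL : is_semiring_dagger addL mulL oneL)
  (HLpos : is_positive_subsemiring addL mulL oneL Lpos)
  (Hpo : geL_partial_order addL Lpos)
  (R : Type) (addR mulR : R -> R -> R) (oneR : R)
  (lay : R -> L) (nu : L -> L -> R -> R)
  (HR : is_layered_domain addL mulL oneL Lpos addR mulR oneR lay nu)
  (Hfin : tangible_finite oneL lay) :
  (infiniteL addL Lpos oneL /\ addL oneL oneL = oneL) \/
  (forall a, lay a = oneL -> nu_cong addL Lpos lay nu a oneR).
Proof.
  destruct HR as [HQ [Hbip1 Hbip2]].
  destruct HQ as [[[addA addC mulA mul1l mul1r mulDl mulDr] mulC] _ nuid _ A1 A2 _ _ B].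
  destruct HL as [_ _ _ Lmul1l _ _ _].
  destruct HLpos as [Lpos1 _].
  destruct (classic (addL oneL oneL = oneL)) as [H11|H11].
  { left. split; [|exact H11]. intro F. exact (F oneL Lpos1 H11). }
  right. intros a Ha.
  apply NNPP. intro Hnc.
  apply H11.
  set (pow := fix pow (n : nat) : R := match n with 0 => oneR | S n => mulR a (pow n) end).
  assert (Hlay : forall n, lay (pow n) = oneL).
  { induction n; simpl. exact A1. rewrite A2, Ha, IHn. apply Lmul1l. }
  assert (Hadd : forall k i, pow (k + i) = mulR (pow k) (pow i)).
  { induction k; intros i; simpl. rewrite mul1l. reflexivity.
    rewrite IHk, mulA. reflexivity. }
  (* pigeonhole *)
  destruct Hfin as [s Hs].
  assert (Hrep : exists k i, pow (S k + i) = pow i).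
  { apply NNPP. intro Hn.
    assert (Hinj : forall x y, pow x = pow y -> x = y).
    { intros x y Exy. destruct (Nat.lt_trichotomy x y) as [Hl|[He|Hl]]; auto.
      - exfalso. apply Hn. exists (y - S x), x. replace (S (y - S x) + x) with y by lia. auto.
      - exfalso. apply Hn. exists (x - S y), y. replace (S (x - S y) + y) with x by lia. auto. }
    assert (ND : NoDup (map pow (seq 0 (S (length s))))).
    { apply FinFun.Injective_map_NoDup. intros x y; apply Hinj. apply seq_NoDup. }
    assert (Inc : incl (map pow (seq 0 (S (length s)))) s).
    { intros x Hx. apply in_map_iff in Hx. destruct Hx as [n [<- _]]. apply Hs, Hlay. }
    pose proof (NoDup_incl_length ND Inc) as Hle.
    rewrite length_map, length_seq in Hle. lia. }
  destruct Hrep as [k [i Hki]].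
  set (b := pow (S k)). set (c := pow i).
  assert (Hc : c = mulR b c). { unfold b, c. rewrite <- Hadd. symmetry; exact Hki. }
  assert (Hcc : addR c c = c).
  { destruct (Hbip1 a oneR Hnc) as [Hlt|Hlt]; apply Hbip2 in Hlt.
    - assert (P : forall n, addR (pow (S n)) oneR = oneR).
      { induction n; simpl in *. rewrite mul1r. exact Hlt.
        set (p := mulR a (pow n)) in *.
        assert (Ea : a = addR (mulR a p) a).
        { rewrite <- (mul1r a) at 1. rewrite <- IHn, mulDr, mul1r. reflexivity. }
        transitivity (addR (mulR a p) (addR a oneR)). rewrite Hlt; reflexivity.
        rewrite addA, <- Ea. exact Hlt. }
      rewrite Hc at 1. rewrite <- (mul1l c) at 2. rewrite <- mulDl.
      unfold b. rewrite P, mul1l. reflexivity.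
    - assert (P : forall n, addR oneR (pow (S n)) = pow (S n)).
      { induction n; simpl in *. rewrite mul1r. exact Hlt.
        set (p := mulR a (pow n)) in *.
        assert (Ep : mulR a p = addR a (mulR a p)).
        { rewrite <- (mul1r a) at 2. rewrite <- mulDr, IHn. reflexivity. }
        rewrite Ep at 1. rewrite addA, Hlt. symmetry; exact Ep. }
      rewrite Hc at 2. rewrite <- (mul1l c) at 1. rewrite <- mulDl.
      unfold b. rewrite P. symmetry; exact Hc. }
  assert (Hcong : nu_cong addL Lpos lay nu c c).
  { exists (lay c). split; [left; reflexivity|]. split; [left; reflexivity|]. reflexivity. }
  destruct (B c c Hcong) as [Hl _].
  rewrite Hcc in Hl. unfold c in Hl. rewrite Hlay in Hl. symmetry; exact Hl.
Qed.
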